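(* Let $n>k\ge1$, $\widetilde{\mathbf P}$ a $k\times(n-k)$ matrix over $\mathbb F_2$ with $r_{\mathbf P}=\mathrm{rank}(\widetilde{\mathbf P}^{\top})$, $\widetilde{\mathbf y}_{\mathrm P}\in\mathbb F_2^{\,n-k}$, and let $\mathcal C=\{[\mathbf x\ \ \mathbf x\widetilde{\mathbf P}]:\mathbf x\in\mathbb F_2^{\,k}\}\subseteq\mathbb F_2^{\,n}$ be the code generated by $[\mathbf I_k\ \ \widetilde{\mathbf P}]$. With $\mathbf E_{\mathbf P},\boldsymbol\Pi_{\mathbf P},\mathbf P_{\mathrm t},\boldsymbol\Pi_{\mathbf Q},\mathbf Q_{\mathrm t},\mathbf e_0$ as in the context, define for $\mathbf e^{\mathrm{pri}}\in\mathbb F_2^{\,r_{\mathbf P}}$ and $\mathbf t\in\mathbb F_2^{\,k-r_{\mathbf P}}$: $$\mathbf e=(\mathbf e^{\mathrm{pri}}\mathbf Q_{\mathrm t}^{\top}\oplus\mathbf e_0)\boldsymbol\Pi_{\mathbf Q}^{\top},\qquad \mathbf z_{\mathbf e}=(\mathbf e\oplus\widetilde{\mathbf y}_{\mathrm P})\mathbf E_{\mathbf P}^{\top},$$ $\mathbf x_{\mathbf e}$ equal to the first $k$ entries of $\mathbf z_{\mathbf e}$ if $k\le n-k$ and to $\mathbf z_{\mathbf e}$ padded with $2k-n$ trailing zeros if $k>n-k$, and $$\Phi(\mathbf e^{\mathrm{pri}},\mathbf t)=\big[(\mathbf x_{\mathbf e}\oplus\mathbf t\mathbf P_{\mathrm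 t}^{\top})\boldsymbol\Pi_{\mathbf P}^{\top}\ \ \ \widetilde{\mathbf y}_{\mathrm P}\oplus\mathbf e\big]\in\mathbb F_2^{\,n}.$$ Then $\Phi$ is a bijection from $\mathbb F_2^{\,r_{\mathbf P}}\times\mathbb F_2^{\,k-r_{\mathbf P}}$ onto $\mathcal C$. In particular the set of codeword estimates obtained from all valid TEPs and all extended choices is the whole code, of size $2^k$.
   Context: All vectors are row vectors over $\mathbb F_2$; $\oplus$ is addition over $\mathbb F_2$. $\mathbf E_{\mathbf P}$ is an invertible $(n-k)\times(n-k)$ matrix and $\boldsymbol\Pi_{\mathbf P}$ a $k\times k$ permutation matrix with $\mathbf E_{\mathbf P}\widetilde{\mathbf P}^{\top}\boldsymbol\Pi_{\mathbf P}=\begin{bmatrix}\mathbf I_{r_{\mathbf P}}&\mathbf R\\ \mathbf 0&\mathbf 0\end{bmatrix}$ with $\mathbf R$ of size $r_{\mathbf P}\times(k-r_{\mathbf P})$, and $\mathbf P_{\mathrm t}=\begin{bmatrix}\mathbf R\\ \mathbf I_{k-r_{\mathbf P}}\end{bmatrix}$. Let $r_{\mathbf Q}=n-k-r_{\mathbf P}$. If $r_{\mathbf P}<n-k$: $\mathbf Q$ is the matrix of the last $r_{\mathbf Q}$ rows of $\mathbf E_{\mathbf P}$; $\mathbf E_{\mathbf Q}$ is an invertible $r_{\mathbf Q}\times r_{\mathbf Q}$ matrix and $\boldsymbol\Pi_{\mathbf Q}$ an $(n-k)\times(n-k)$ permutation matrix with $\mathbf E_{\mathbf Q}\mathbf Q\boldsymbol\Pi_{\mathbf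 Q}=[\mathbf I_{r_{\mathbf Q}}\ \ \mathbf Q_{\mathrm r}]$; $\mathbf Q_{\mathrm t}=\begin{bmatrix}\mathbf Q_{\mathrm r}\\ \mathbf I_{r_{\mathbf P}}\end{bmatrix}$; $\mathbf e_0=[\,\widetilde{\mathbf y}_{\mathrm P}\mathbf Q^{\top}\mathbf E_{\mathbf Q}^{\top}\ \ \mathbf 0_{r_{\mathbf P}}\,]$. If $r_{\mathbf P}=n-k$: $\mathbf Q_{\mathrm t}=\boldsymbol\Pi_{\mathbf Q}=\mathbf I_{n-k}$ and $\mathbf e_0=\mathbf 0$. The vector $\mathbf e^{\mathrm{pri}}$ is called the primary TEP and $\mathbf t$ plays the role of the extended TEP. *)

(* Defs.v *)
(* Row vectors over F_2 = 'F_2; xor = +. *)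
From HB Require Import structures.
From mathcomp Require Import all_boot all_order all_fingroup all_algebra.
Set Implicit Arguments. Unset Strict Implicit. Unset Printing Implicit Defensive.
Import GRing.Theory.
Local Open Scope ring_scope.

Notation F2 := 'F_2.

Section Defs.
Variables (k m : nat) (P : 'M[F2]_(k, m)).

Definition rk : nat := \rank P^T.

Lemma rk_le_m : (rk <= m)%N. Proof. exact: rank_leq_row. Qed.
Lemma rk_le_k : (rk <= k)%N. Proof. exact: rank_leq_col. Qed.

Definition eqk : k = (rk + (k - rk))%N := esym (subnKC rk_le_k).
Definition eqm : m = (rk + (m - rk))%N := esym (subnKC rk_le_m).
Definition eqQ : ((m - rk) + rk)%N = m := subnK rk_le_m.

Definition topblock (R : 'M[F2]_(rk, k - rk)) : 'M[F2]_(m, k) :=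
  castmx (esym eqm, esym eqk) (block_mx 1%:M R 0 0).

Definition Pt (R : 'M[F2]_(rk, k - rk)) : 'M[F2]_(k, k - rk) :=
  castmx (esym eqk, erefl) (col_mx R 1%:M).

Definition Qmat (EP : 'M[F2]_m) : 'M[F2]_(m - rk, m) :=
  dsubmx (castmx (eqm, erefl) EP).

Definition qblock (Qr : 'M[F2]_(m - rk, rk)) : 'M[F2]_(m - rk, m) :=
  castmx (erefl, eqQ) (row_mx 1%:M Qr).

Definition Qt (Qr : 'M[F2]_(m - rk, rk)) : 'M[F2]_(m, rk) :=
  castmx (eqQ, erefl) (col_mx Qr 1%:M).

Definition e0 (y : 'rV[F2]_m) (EQ : 'M[F2]_(m - rk)) (EP : 'M[F2]_m) : 'rV[F2]_m :=
  castmx (erefl, eqQ) (row_mx (y *m (Qmat EP)^T *m EQ^T) 0).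

Definition err (EP : 'M[F2]_m) (EQ : 'M[F2]_(m - rk)) (PiQ : 'M[F2]_m)
  (Qr : 'M[F2]_(m - rk, rk)) (y : 'rV[F2]_m) (epri : 'rV[F2]_rk) : 'rV[F2]_m :=
  (epri *m (Qt Qr)^T + e0 y EQ EP) *m PiQ^T.

End Defs.

Definition trunc_pad (m k : nat) (z : 'rV[F2]_m) : 'rV[F2]_k :=
  \row_(j < k) \sum_(i < m) (if (i == j :> nat) then z 0 i else 0).

Section Phi.
Variables (n k : nat) (hn : (k + (n - k))%N = n) (P : 'M[F2]_(k, n - k)).
Variables (EP : 'M[F2]_(n - k)) (PiP : 'M[F2]_k) (R : 'M[F2]_(rk P, k - rk P)).
Variables (EQ : 'M[F2]_(n - k - rk P)) (PiQ : 'M[F2]_(n - k))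
          (Qr : 'M[F2]_(n - k - rk P, rk P)) (y : 'rV[F2]_(n - k)).

Definition Phi (p : 'rV[F2]_(rk P) * 'rV[F2]_(k - rk P)) : 'rV[F2]_n :=
  let e := err EP EQ PiQ Qr y p.1 in
  let z := (e + y) *m EP^T in
  let x := trunc_pad k z in
  castmx (erefl, hn) (row_mx ((x + p.2 *m (Pt R)^T) *m PiP^T) (y + e)).

Definition code : {set 'rV[F2]_n} :=
  [set castmx (erefl, hn) (row_mx x (x *m P)) | x : 'rV[F2]_k].

End Phi.

(* Main.v *)
Require Import Defs.
From HB Require Import structures.
From mathcomp Require Import all_boot all_order all_fingroup all_algebra.
Import GRing.Theory.
Local Open Scope ring_scope.

Lemma castmx_mulmx (R : pzRingType) a b c a' b' c' (ea : a = a') (eb : b = b') (ec : c = c')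
  (A : 'M[R]_(a, b)) (B : 'M[R]_(b, c)) :
  castmx (ea, ec) (A *m B) = castmx (ea, eb) A *m castmx (eb, ec) B.
Proof. by case: a' / ea; case: b' / eb; case: c' / ec; rewrite !castmx_id. Qed.

Lemma castmx0 (R : pzRingType) a b a' b' (e : (a = a') * (b = b')) :
  castmx e (0 : 'M[R]_(a, b)) = 0.
Proof. by apply/matrixP => i j; rewrite castmxE !mxE. Qed.

Lemma perm_mxTK {Rg : pzSemiRingType} {n} {A : 'M[Rg]_n} : is_perm_mx A -> A *m A^T = 1%:M /\ A^T *m A = 1%:M.
Proof.
move=> /is_perm_mxP [s ->]; rewrite tr_perm_mx -!perm_mxM mulgV mulVg perm_mx1 //.
Qed.

Lemma F2xx (a : F2) : a + a = 0.
Proof. case: a => [[|[|i]] Hi]; try by apply/val_inj. Qed.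

Lemma F2mx_xx p q (A : 'M[F2]_(p, q)) : A + A = 0.
Proof. by apply/matrixP => i j; rewrite !mxE F2xx. Qed.

Lemma trunc_lemma k m r k2 m2 (hk : k = (r + k2)%N) (hm : m = (r + m2)%N)
  (z : 'rV[F2]_m) (a : 'rV[F2]_r) :
  castmx (erefl, hm) z = row_mx a 0 -> castmx (erefl, hk) (trunc_pad k z) = row_mx a 0.
Proof.
subst k m; rewrite !castmx_id => ->.
apply/rowP => j; rewrite /trunc_pad [LHS]mxE [RHS]mxE.
case: splitP => [j1 Hj | j2 Hj].
- rewrite (bigD1 (lshift m2 j1)) //= Hj eqxx row_mxEl big1 ?addr0 //.
  move=> i /negPf; rewrite -val_eqE /= -Hj => ->; done.
- rewrite [RHS]mxE; apply: big1 => i _; case: ifP => // /eqP Hij; rewrite mxE.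
  case: splitP => [i1 Hi | i2 _]; last by rewrite mxE.
  by exfalso; move: (ltn_ord i1); rewrite -Hi Hij Hj ltnNge leq_addr.
Qed.

Lemma xT_lemma k m (P : 'M[F2]_(k, m)) (R : 'M[F2]_(rk P, k - rk P))
  (z : 'rV[F2]_m) a :
  castmx (erefl, eqm P) z = row_mx a 0 -> trunc_pad k z *m (topblock R)^T = z.
Proof.
move=> H; apply: (can_inj (castmxK (erefl 1%N) (eqm P))).
rewrite H /topblock trmx_cast /= (@castmx_mulmx _ _ _ _ _ _ _ (erefl 1%N) (eqk P) (eqm P)).
rewrite castmxKV (@trunc_lemma _ _ _ _ _ (eqk P) _ _ _ H) tr_block_mx mul_row_block.
by rewrite trmx1 !trmx0 mulmx1 !mul0mx !mulmx0 !addr0.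
Qed.

Lemma TPt0 k m (P : 'M[F2]_(k, m)) (R : 'M[F2]_(rk P, k - rk P)) :
  topblock R *m Pt R = 0.
Proof.
rewrite /topblock /Pt -castmx_mulmx mul_block_col mul1mx mulmx1 F2mx_xx !mul0mx addr0.
by rewrite col_mx0 castmx0.
Qed.

Lemma qQt0 k m (P : 'M[F2]_(k, m)) (Qr : 'M[F2]_(m - rk P, rk P)) :
  @qblock _ _ P Qr *m @Qt _ _ P Qr = 0.
Proof.
by rewrite /qblock /Qt -castmx_mulmx castmx_id mul_row_col mul1mx mulmx1 F2mx_xx.
Qed.

Lemma eQ_lemma k m (P : 'M[F2]_(k, m)) (EP : 'M[F2]_m) (EQ : 'M[F2]_(m - rk P))
  (PiQ : 'M[F2]_m) (Qr : 'M[F2]_(m - rk P, rk P)) (y : 'rV[F2]_m) epri :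
  EQ \in unitmx -> EQ *m Qmat P EP *m PiQ = qblock Qr ->
  (y + @err _ _ P EP EQ PiQ Qr y epri) *m (Qmat P EP)^T = 0.
Proof.
move=> uEQ HQ.
have HQ' : Qmat P EP *m PiQ = invmx EQ *m qblock Qr by rewrite -HQ -mulmxA mulKmx.
rewrite mulmxDl /err -mulmxA -trmx_mul HQ' trmx_mul mulmxA mulmxDl -(mulmxA epri) -trmx_mul qQt0 trmx0 mulmx0 add0r.
rewrite /e0 /qblock trmx_cast /= -castmx_mulmx castmx_id tr_row_mx mul_row_col trmx1 mulmx1 mul0mx addr0.
by rewrite -mulmxA -trmx_mul mulVmx // trmx1 mulmx1 F2mx_xx.
Qed.

Lemma mul_castrow_inj a b c (e : (b + a)%N = c) (N : 'M[F2]_(a, b)) (u v : 'rV[F2]_a) :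
  u *m castmx (erefl, e) (row_mx N 1%:M) = v *m castmx (erefl, e) (row_mx N 1%:M) -> u = v.
Proof.
rewrite -!(@castmx_mulmx _ _ _ _ _ _ _ (erefl 1%N) (erefl a) e).
move=> /(can_inj (castmxK _ _)); rewrite !mul_mx_row => /eq_row_mx [_].
by rewrite !mulmx1.
Qed.

Theorem mainTheorem5 (n k : nat) (hkn : (k < n)%N) (hk : (1 <= k)%N)
  (P : 'M[F2]_(k, n - k)) (y : 'rV[F2]_(n - k))
  (EP : 'M[F2]_(n - k)) (PiP : 'M[F2]_k) (R : 'M[F2]_(rk P, k - rk P))
  (EQ : 'M[F2]_(n - k - rk P)) (PiQ : 'M[F2]_(n - k))
  (Qr : 'M[F2]_(n - k - rk P, rk P)) :
  EP \in unitmx -> is_perm_mx PiP ->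
  EP *m P^T *m PiP = topblock R ->
  EQ \in unitmx -> is_perm_mx PiQ ->
  EQ *m Qmat P EP *m PiQ = qblock Qr ->
  (rk P = (n - k)%N -> PiQ = 1%:M) ->
  let hn := subnKC (ltnW hkn) in
  injective (Phi hn EP PiP R EQ PiQ Qr y) /\
  [set Phi hn EP PiP R EQ PiQ Qr y p | p : 'rV[F2]_(rk P) * 'rV[F2]_(k - rk P)]
    = code hn P /\
  #|code hn P| = (2 ^ k)%N.
Proof.
move=> uEP pPiP HP uEQ pPiQ HQ _ hn.
have [PPt PtP] := perm_mxTK pPiP.
have [QQt QtQ] := perm_mxTK pPiQ.
have HPE : P *m EP^T = PiP *m (topblock R)^T.
  have : EP *m P^T = topblock R *m PiP^T by rewrite -HP -mulmxA PPt mulmx1.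
  by move/(congr1 trmx); rewrite !trmx_mul !trmxK.
have Hz : forall epri, exists a,
    castmx (erefl, eqm P) ((err EP EQ PiQ Qr y epri + y) *m EP^T) = row_mx a 0.
  move=> epri; set e := err EP EQ PiQ Qr y epri.
  rewrite (@castmx_mulmx _ _ _ _ _ _ _ (erefl 1%N) (erefl _) (eqm P)) castmx_id.
  have -> : castmx (erefl, eqm P) EP^T = (castmx (eqm P, erefl) EP)^T by rewrite trmx_cast.
  rewrite -[castmx (eqm P, erefl) EP]vsubmxK tr_col_mx mul_mx_row.
  have -> : (e + y) *m (dsubmx (castmx (eqm P, erefl) EP))^T = 0.
    by rewrite addrC; apply: eQ_lemma.
  by eexists.
have uEPT : EP^T \in unitmx by rewrite unitmx_tr.
have Hmem : forall p, Phi hn EP PiP R EQ PiQ Qr y p \in code hn P.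
  move=> [epri t]; rewrite /Phi /code /=; apply/imsetP.
  eexists; first done.
  congr (castmx _ (row_mx _ _)).
  apply: (can_inj (mulmxK uEPT)).
  rewrite -[_ *m P *m EP^T]mulmxA HPE !mulmxA -(mulmxA _ PiP^T PiP) PtP mulmx1 [in RHS]mulmxDl.
  rewrite -(mulmxA t) -trmx_mul TPt0 trmx0 mulmx0 addr0.
  have [a Ha] := Hz epri.
  by rewrite (@xT_lemma _ _ P R _ _ Ha) addrC.
have Hinj : injective (Phi hn EP PiP R EQ PiQ Qr y).
  move=> [e1 t1] [e2 t2]; rewrite /Phi /=.
  move=> /(can_inj (castmxK _ _)) /eq_row_mx [HX He].
  move/addrI: He; rewrite /err => /(congr1 (mulmx^~ PiQ)).
  rewrite -!mulmxA QtQ !mulmx1 => /addIr.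
  rewrite /Qt trmx_cast /= tr_col_mx trmx1 => /mul_castrow_inj ?; subst e2.
  move/(congr1 (mulmx^~ PiP)): HX; rewrite -!mulmxA PtP !mulmx1 => /addrI.
  by rewrite /Pt trmx_cast /= tr_col_mx trmx1 => /mul_castrow_inj ->.
have Hcard : #|code hn P| = (2 ^ k)%N.
  rewrite /code card_imset; last first.
    by move=> x1 x2 /(can_inj (castmxK _ _)) /eq_row_mx [].
  by rewrite card_mx card_Fp // mul1n.
split => //; split => //.
apply/eqP; rewrite eqEcard; apply/andP; split.
  by apply/subsetP => _ /imsetP [p _ ->]; apply: Hmem.
rewrite Hcard card_imset // card_prod !card_mx card_Fp // !mul1n -expnD subnKC //.
exact: rk_le_k.
Qed.
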